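(* For a one-parameter family $\rho(\theta)=\sum_{k=1}^d p_k(\theta)|w_k(\theta)\rangle\langle w_k(\theta)|$ with a chosen smooth spectral decomposition as in the context, equality $H_{SLD}(\theta)=C_L(\theta)$ holds at $\theta$ if and only if $\langle w_j'(\theta)|w_k(\theta)\rangle=0$ for all $j\neq k$ with $p_j(\theta)>0$ and $p_k(\theta)>0$. In particular, if $\rho(\theta)$ is a pure state then $C_L(\theta)=H_{SLD}(\theta)$.
   Context: Let $I\subseteq\mathbb{R}$ be an open interval and $\rho(\theta)=\sum_{k=1}^d p_k(\theta)|w_k(\theta)\rangle\langle w_k(\theta)|$, $\theta\in I$, where $p_1,\dots,p_d:I\to[0,1]$ are smooth with $\sum_k p_k=1$, and $|w_1(\theta)\rangle,\dots,|w_d(\theta)\rangle$ is an orthonormal basis of $\mathbb{C}^d$ depending smoothly on $\theta$. Write $|w_k'\rangle=\frac{d}{d\theta}|w_k(\theta)\rangle$. Convention: in sums $\sum_i \frac{1}{p_i}(\cdot)^2$, indices with $p_i(\theta)=0$ are omitted. The $C_L$ quantum information is $$C_L(\theta)=\sum_i\frac{1}{p_i}\Big(\frac{dp_i}{d\theta}\Big)^2+4\sum_{j<k}(p_j+p_k)|\langle w_j'|w_k\rangle|^2 .$$ The SLD quantum information is $H_{SLD}(\theta)=\mathrm{tr}\{\rho(\theta)\lambda(\theta)^2\}$, where $\lambda(\theta)$ is any Hermitian solution of $\frac{d\rho}{d\theta}=\frac12(\rho\lambda+\lambda\rho)$. *)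

(* Defs.v *)
From Stdlib Require Import Reals.
Open Scope R_scope.

Record C : Type := mkC { Re : R; Im : R }.
Definition RtoC (x : R) : C := mkC x 0.
Definition C0 : C := RtoC 0.
Definition Cadd (z w : C) : C := mkC (Re z + Re w) (Im z + Im w).
Definition Cmul (z w : C) : C :=
  mkC (Re z * Re w - Im z * Im w) (Re z * Im w + Im z * Re w).
Definition Cconj (z : C) : C := mkC (Re z) (- Im z).
Definition Cnorm2 (z : C) : R := Re z * Re z + Im z * Im z.

Fixpoint sumR (n : nat) (f : nat -> R) : R :=
  match n with O => 0 | S m => sumR m f + f m end.
Fixpoint sumC (n : nat) (f : nat -> C) : C :=
  match n with O => C0 | S m => Cadd (sumC m f) (f m) end.

(* ---------- vectors in C^d (components with index < d) and matrices ---------- *)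
Definition vec := nat -> C.
Definition mat := nat -> nat -> C.

Definition inner (d : nat) (u v : vec) : C := sumC d (fun i => Cmul (Cconj (u i)) (v i)).

Definition mxmul (d : nat) (A B : mat) : mat :=
  fun i j => sumC d (fun l => Cmul (A i l) (B l j)).
Definition mxtr (d : nat) (A : mat) : C := sumC d (fun i => A i i).
Definition mx_eq (d : nat) (A B : mat) : Prop :=
  forall i j, (i < d)%nat -> (j < d)%nat -> A i j = B i j.
Definition hermitian (d : nat) (A : mat) : Prop :=
  forall i j, (i < d)%nat -> (j < d)%nat -> A i j = Cconj (A j i).

Definition rho (d : nat) (p : nat -> R -> R) (w : nat -> R -> vec) (t : R) : mat :=
  fun i j => sumC d (fun k => Cmul (RtoC (p k t)) (Cmul (w k t i) (Cconj (w k t j)))).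

Definition is_open_interval (I : R -> Prop) : Prop :=
  (exists x, I x) /\
  (forall x y z, I x -> I z -> x <= y <= z -> I y) /\
  (forall x, I x -> exists eps, 0 < eps /\ forall y, Rabs (y - x) < eps -> I y).

Definition smooth_on (I : R -> Prop) (f : R -> R) : Prop :=
  exists D : nat -> R -> R, D O = f /\
    forall n x, I x -> derivable_pt_lim (D n) x (D (S n) x).

Definition smoothC_on (I : R -> Prop) (f : R -> C) : Prop :=
  smooth_on I (fun t => Re (f t)) /\ smooth_on I (fun t => Im (f t)).
Definition derivableC_lim (f : R -> C) (x : R) (l : C) : Prop :=
  derivable_pt_lim (fun t => Re (f t)) x (Re l) /\
  derivable_pt_lim (fun t => Im (f t)) x (Im l).

Definition CL (d : nat) (pt : nat -> R) (dp : nat -> R) (wt dw : nat -> vec) : R :=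
  sumR d (fun i => if Req_EM_T (pt i) 0 then 0 else / pt i * (dp i * dp i))
  + 4 * sumR d (fun k => sumR k (fun j =>
          (pt j + pt k) * Cnorm2 (inner d (dw j) (wt k)))).

Definition HSLD_of (d : nat) (rh lam : mat) : C := mxtr d (mxmul d rh (mxmul d lam lam)).

Definition SLD_eq (d : nat) (rh drho lam : mat) : Prop :=
  forall i j, (i < d)%nat -> (j < d)%nat ->
    drho i j = Cmul (RtoC (/ 2)) (Cadd (mxmul d rh lam i j) (mxmul d lam rh i j)).

Definition pure_state (d : nat) (rh : mat) : Prop := mx_eq d (mxmul d rh rh) rh.

(* Main.v *)
From Stdlib Require Import Reals Lra Psatz ClassicalEpsilon FunctionalExtensionality.
Require Import Defs.
Open Scope R_scope.

Definition dlt (j k : nat) : R := if Nat.eq_dec j k then 1 else 0.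

Module MC.
From HB Require Import structures.
From mathcomp Require Import all_boot all_algebra.
Import GRing.Theory.

Definition Ceqb (z w : C) : bool :=
  if Req_EM_T (Re z) (Re w) then (if Req_EM_T (Im z) (Im w) then true else false) else false.
Lemma CeqP : Equality.axiom Ceqb.
Proof.
move=> [a b] [c e]; rewrite /Ceqb /=.
case: (Req_EM_T a c) => h1; last by constructor; case.
case: (Req_EM_T b e) => h2; last by constructor; case.
by constructor; rewrite h1 h2.
Qed.
HB.instance Definition _ := hasDecEq.Build C CeqP.

Definition Cfind (P : pred C) (n : nat) : option C :=
  match excluded_middle_informative (exists x, P x) with
  | left H => Some (proj1_sig (constructive_indefinite_description _ H))
  | right _ => None end.
Lemma Cfind_correct P n x : Cfind P n = Some x -> P x.
Proof.
rewrite /Cfind; case: excluded_middle_informative => // H [<-].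
exact: (proj2_sig (constructive_indefinite_description _ H)).
Qed.
Lemma Cfind_complete (P : pred C) : (exists x, P x) -> exists n, Cfind P n.
Proof. by move=> H; exists 0%N; rewrite /Cfind; case: excluded_middle_informative. Qed.
Lemma Cfind_ext (P Q : pred C) : P =1 Q -> Cfind P =1 Cfind Q.
Proof. move=> h; have -> : P = Q by apply: functional_extensionality. by []. Qed.
HB.instance Definition _ := hasChoice.Build C Cfind_correct Cfind_complete Cfind_ext.

Definition Copp (z : C) : C := mkC (- Re z) (- Im z).
Lemma CaddA : associative Cadd.
Proof. move=> [a b] [c e] [f g]; rewrite /Cadd /=; f_equal; ring. Qed.
Lemma CaddC : commutative Cadd.
Proof. move=> [a b] [c e]; rewrite /Cadd /=; f_equal; ring. Qed.
Lemma Cadd0 : left_id C0 Cadd.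
Proof. move=> [a b]; rewrite /Cadd /=; f_equal; ring. Qed.
Lemma CaddN : left_inverse C0 Copp Cadd.
Proof. move=> [a b]; rewrite /Cadd /C0 /RtoC /=; f_equal; ring. Qed.
HB.instance Definition _ := GRing.isZmodule.Build C CaddA CaddC Cadd0 CaddN.
Lemma CmulA : associative Cmul.
Proof. move=> [a b] [c e] [f g]; rewrite /Cmul /=; f_equal; ring. Qed.
Lemma CmulC : commutative Cmul.
Proof. move=> [a b] [c e]; rewrite /Cmul /=; f_equal; ring. Qed.
Lemma Cmul1 : left_id (RtoC 1) Cmul.
Proof. move=> [a b]; rewrite /Cmul /=; f_equal; ring. Qed.
Lemma CmulDl : left_distributive Cmul Cadd.
Proof. move=> [a b] [c e] [f g]; rewrite /Cmul /Cadd /=; f_equal; ring. Qed.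
Lemma C1n0 : RtoC 1 != C0.
Proof. apply/eqP; case; exact: R1_neq_R0. Qed.
HB.instance Definition _ := GRing.Zmodule_isComNzRing.Build C CmulA CmulC Cmul1 CmulDl C1n0.
Definition Cinv (z : C) : C := mkC (Re z / Cnorm2 z) (- Im z / Cnorm2 z).
Lemma CmulV (z : C) : z != C0 -> Cmul (Cinv z) z = RtoC 1.
Proof.
case: z => a b /eqP hz; rewrite /Cmul /Cinv /Cnorm2 /RtoC /=.
have hn : a * a + b * b <> 0.
  move=> h; apply: hz; rewrite /GRing.zero /= /C0 /RtoC.
  have ha : a = 0 by nra. have hb : b = 0 by nra. by rewrite ha hb.
f_equal; field; exact: hn.
Qed.
Lemma Cinv0 : Cinv C0 = C0.
Proof. rewrite /Cinv /= /C0 /RtoC /Cnorm2 /=; f_equal; rewrite /Rdiv; ring. Qed.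
HB.instance Definition _ := GRing.ComNzRing_isField.Build C CmulV Cinv0.

Local Open Scope ring_scope.
Lemma big_sumC n (F : nat -> C) : \sum_(i < n) F i = sumC n F.
Proof. elim: n => [|n IH]; first by rewrite big_ord0. by rewrite big_ord_recr /= IH. Qed.

Lemma complete_mc (d : nat) (W : nat -> nat -> C) :
  (forall j k, (j < d)%coq_nat -> (k < d)%coq_nat ->
     sumC d (fun i => Cmul (Cconj (W i j)) (W i k)) = RtoC (dlt j k)) ->
  forall i l, (i < d)%coq_nat -> (l < d)%coq_nat ->
     sumC d (fun k => Cmul (W i k) (Cconj (W l k))) = RtoC (dlt i l).
Proof.
move=> H i l hi hl.
pose A : 'M[C]_d := \matrix_(j, i) Cconj (W i j).
pose B : 'M[C]_d := \matrix_(i, k) W i k.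
have AB : A *m B = 1%:M.
  apply/matrixP => j k; rewrite !mxE.
  rewrite (eq_bigr (fun i : 'I_d => Cmul (Cconj (W i j)) (W i k))); last by move=> x _; rewrite !mxE.
  rewrite (big_sumC d (fun i => Cmul (Cconj (W i j)) (W i k))) H; try exact/ltP.
  rewrite /dlt; case: Nat.eq_dec => [e|e].
    have -> : j = k by apply: val_inj.
    by rewrite eqxx.
  have -> : (j == k) = false by apply/eqP => e'; apply: e; rewrite e'.
  by [].
have := mulmx1C AB => /matrixP /(_ (Ordinal (introT ltP hi)) (Ordinal (introT ltP hl))).
rewrite !mxE.
rewrite (eq_bigr (fun k : 'I_d => Cmul (W i k) (Cconj (W l k)))); last by move=> x _; rewrite !mxE.
rewrite (big_sumC d (fun k => Cmul (W i k) (Cconj (W l k)))) => ->.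
rewrite /dlt; case: Nat.eq_dec => [e|e].
  subst. have -> : (Ordinal (introT ltP hi) == Ordinal (introT ltP hl)) = true by apply/eqP; apply: val_inj.
  by [].
have -> : (Ordinal (introT ltP hi) == Ordinal (introT ltP hl)) = false.
  by apply/eqP => e'; apply: e; case: e'.
by [].
Qed.
End MC.

Lemma complete (d : nat) (W : nat -> nat -> C) :
  (forall j k, (j < d)%nat -> (k < d)%nat ->
     sumC d (fun i => Cmul (Cconj (W i j)) (W i k)) = RtoC (dlt j k)) ->
  forall i l, (i < d)%nat -> (l < d)%nat ->
     sumC d (fun k => Cmul (W i k) (Cconj (W l k))) = RtoC (dlt i l).
Proof. exact (MC.complete_mc d W). Qed.


Local Notation "a <+> b" := (Cadd a b) (at level 50, left associativity).
Local Notation "a <*> b" := (Cmul a b) (at level 40, left associativity).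


Definition Cneg (z : C) : C := mkC (- Re z) (- Im z).
Lemma C_eq (z w : C) : Re z = Re w -> Im z = Im w -> z = w.
Proof. destruct z, w; simpl; intros; subst; reflexivity. Qed.

Lemma C_ring : ring_theory C0 (RtoC 1) Cadd Cmul (fun a b => Cadd a (Cneg b)) Cneg eq.
Proof.
  constructor; intros; apply C_eq; simpl; ring.
Qed.
Add Ring Cring : C_ring.

Ltac ceq := apply C_eq; simpl; ring.

Lemma sumC_ext n f g : (forall i, (i < n)%nat -> f i = g i) -> sumC n f = sumC n g.
Proof.
  induction n; intros H; simpl; auto.
  rewrite IHn by (intros; apply H; lia). rewrite (H n) by lia. reflexivity.
Qed.
Lemma sumC_add n f g : sumC n (fun i => f i <+> g i) = sumC n f <+> sumC n g.
Proof. induction n; simpl. ceq. rewrite IHn. ring. Qed.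
Lemma sumC_scal n c f : sumC n (fun i => c <*> f i) = c <*> sumC n f.
Proof. induction n; simpl. ceq. rewrite IHn. ring. Qed.
Lemma sumC_scalr n c f : sumC n (fun i => f i <*> c) = sumC n f <*> c.
Proof. induction n; simpl. ceq. rewrite IHn. ring. Qed.
Lemma sumC_zero n : sumC n (fun _ => C0) = C0.
Proof. induction n; simpl; auto. rewrite IHn. ceq. Qed.
Lemma sumC_swap n m f :
  sumC n (fun i => sumC m (fun j => f i j)) = sumC m (fun j => sumC n (fun i => f i j)).
Proof.
  induction n; simpl. rewrite sumC_zero; auto.
  rewrite IHn. rewrite <- sumC_add. reflexivity.
Qed.
Lemma dlt_sym j k : dlt j k = dlt k j.
Proof. unfold dlt. destruct (Nat.eq_dec j k), (Nat.eq_dec k j); subst; auto; congruence. Qed.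
Lemma sumC_delta n k f : (k < n)%nat -> sumC n (fun i => RtoC (dlt i k) <*> f i) = f k.
Proof.
  induction n; intros H; simpl. lia.
  destruct (Nat.eq_dec k n).
  - subst. rewrite (sumC_ext n _ (fun _ => C0)).
    + rewrite sumC_zero. unfold dlt. destruct (Nat.eq_dec n n); [|congruence]. ceq.
    + intros i Hi. unfold dlt. destruct (Nat.eq_dec i n); [lia|]. ceq.
  - rewrite IHn by lia. unfold dlt at 1. destruct (Nat.eq_dec n k); [congruence|]. ceq.
Qed.
Lemma sumC_delta' n k f : (k < n)%nat -> sumC n (fun i => RtoC (dlt k i) <*> f i) = f k.
Proof. intros. rewrite <- (sumC_delta n k f H). apply sumC_ext. intros. rewrite dlt_sym. auto. Qed.
Lemma sumC_conj n f : Cconj (sumC n f) = sumC n (fun i => Cconj (f i)).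
Proof. induction n; simpl. ceq. rewrite <- IHn. ceq. Qed.
Lemma sumC_RtoC n f : sumC n (fun i => RtoC (f i)) = RtoC (sumR n f).
Proof. induction n; simpl. reflexivity. rewrite IHn. ceq. Qed.
Lemma Cconj_mul a b : Cconj (a <*> b) = Cconj a <*> Cconj b.
Proof. ceq. Qed.
Lemma Cconj_add a b : Cconj (a <+> b) = Cconj a <+> Cconj b.
Proof. ceq. Qed.
Lemma Cconj_conj a : Cconj (Cconj a) = a.
Proof. ceq. Qed.
Lemma Cconj_RtoC r : Cconj (RtoC r) = RtoC r.
Proof. ceq. Qed.
Lemma RtoC_add a b : RtoC (a + b) = RtoC a <+> RtoC b.
Proof. ceq. Qed.
Lemma RtoC_mul a b : RtoC (a * b) = RtoC a <*> RtoC b.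
Proof. ceq. Qed.
Lemma Cnorm2_eq z : z <*> Cconj z = RtoC (Cnorm2 z).
Proof. unfold Cnorm2. ceq. Qed.

Definition mv (d : nat) (M : mat) (y : vec) : vec := fun a => sumC d (fun b => M a b <*> y b).

Lemma inner_conj d x y : inner d x y = Cconj (inner d y x).
Proof. unfold inner. rewrite sumC_conj. apply sumC_ext. intros. ceq. Qed.

Lemma inner_ext d x y x' y' : (forall a, (a < d)%nat -> x a = x' a) ->
  (forall a, (a < d)%nat -> y a = y' a) -> inner d x y = inner d x' y'.
Proof. intros. unfold inner. apply sumC_ext. intros. rewrite H, H0 by auto. auto. Qed.

Lemma inner_mv_ext d x M M' y : (forall a b, (a < d)%nat -> (b < d)%nat -> M a b = M' a b) ->
  inner d x (mv d M y) = inner d x (mv d M' y).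
Proof.
  intros. apply inner_ext; auto. intros a Ha. unfold mv. apply sumC_ext. intros. rewrite H; auto.
Qed.

Lemma sandwich d x c y z t :
  inner d x (mv d (fun a b => sumC d (fun m => c m <*> (y m a <*> Cconj (z m b)))) t)
  = sumC d (fun m => c m <*> inner d x (y m) <*> inner d (z m) t).
Proof.
  unfold inner, mv.
  transitivity (sumC d (fun a => sumC d (fun m => sumC d (fun b =>
        c m <*> (Cconj (x a) <*> y m a) <*> (Cconj (z m b) <*> t b))))).
  - apply sumC_ext; intros a Ha. rewrite <- sumC_scal.
    transitivity (sumC d (fun b => sumC d (fun m =>
        c m <*> (Cconj (x a) <*> y m a) <*> (Cconj (z m b) <*> t b)))).
    + apply sumC_ext; intros b Hb. rewrite <- sumC_scalr, <- sumC_scal.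
      apply sumC_ext; intros. ring.
    + apply sumC_swap.
  - rewrite sumC_swap. apply sumC_ext; intros m Hm.
    transitivity (c m <*> (sumC d (fun a => Cconj (x a) <*> y m a) <*> sumC d (fun b => Cconj (z m b) <*> t b))); [|ring].
    rewrite <- sumC_scalr. rewrite <- sumC_scal. apply sumC_ext; intros a Ha.
    rewrite <- sumC_scal. rewrite <- sumC_scal. apply sumC_ext; intros. ring.
Qed.

Lemma inner_mv_add d x M1 M2 y :
  inner d x (mv d (fun a b => M1 a b <+> M2 a b) y) = inner d x (mv d M1 y) <+> inner d x (mv d M2 y).
Proof.
  unfold inner, mv. rewrite <- sumC_add. apply sumC_ext; intros.
  transitivity (Cconj (x i) <*> (sumC d (fun b => M1 i b <*> y b) <+> sumC d (fun b => M2 i b <*> y b))); [|ring].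
  rewrite <- sumC_add. f_equal. apply sumC_ext; intros. ring.
Qed.

Lemma inner_mv_scal d x c M y :
  inner d x (mv d (fun a b => c <*> M a b) y) = c <*> inner d x (mv d M y).
Proof.
  unfold inner, mv. rewrite <- sumC_scal. apply sumC_ext; intros.
  transitivity (sumC d (fun b => c <*> (Cconj (x i) <*> (M i b <*> y b)))).
  - rewrite <- sumC_scal. apply sumC_ext; intros. ring.
  - rewrite sumC_scal, sumC_scal. reflexivity.
Qed.

Lemma mv_mul d x A B y : inner d x (mv d (mxmul d A B) y) = inner d x (mv d A (mv d B y)).
Proof.
  apply inner_ext; auto. intros a Ha. unfold mv, mxmul.
  transitivity (sumC d (fun b => sumC d (fun l => A a l <*> (B l b <*> y b)))).
  - apply sumC_ext; intros. rewrite <- sumC_scalr. apply sumC_ext; intros. ring.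
  - rewrite sumC_swap. apply sumC_ext; intros. rewrite <- sumC_scal. reflexivity.
Qed.

Definition ONB d (W : nat -> vec) := forall j k, (j < d)%nat -> (k < d)%nat ->
  inner d (W j) (W k) = RtoC (dlt j k).

Lemma expand d W y a : ONB d W -> (a < d)%nat ->
  y a = sumC d (fun n => inner d (W n) y <*> W n a).
Proof.
  intros HO Ha.
  assert (Hc := complete d (fun i k => W k i) HO).
  transitivity (sumC d (fun b => RtoC (dlt a b) <*> y b)).
  - rewrite sumC_delta'; auto.
  - unfold inner. transitivity (sumC d (fun b => sumC d (fun n => (W n a <*> Cconj (W n b)) <*> y b))).
    + apply sumC_ext; intros b Hb. rewrite sumC_scalr. rewrite Hc; auto.
    + rewrite sumC_swap. apply sumC_ext; intros n Hn. rewrite <- sumC_scalr. apply sumC_ext; intros. ring.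
Qed.

Lemma lin d x M y cf z : (forall b, (b < d)%nat -> y b = sumC d (fun n => cf n <*> z n b)) ->
  inner d x (mv d M y) = sumC d (fun n => cf n <*> inner d x (mv d M (z n))).
Proof.
  intros H. unfold inner, mv.
  transitivity (sumC d (fun a => sumC d (fun n => cf n <*> (Cconj (x a) <*> sumC d (fun b => M a b <*> z n b))))).
  - apply sumC_ext; intros a Ha. rewrite <- sumC_scal.
    transitivity (sumC d (fun b => sumC d (fun n => Cconj (x a) <*> (cf n <*> (M a b <*> z n b))))).
    + apply sumC_ext; intros b Hb. rewrite H by auto. rewrite <- !sumC_scal. apply sumC_ext; intros. ring.
    + rewrite sumC_swap. apply sumC_ext; intros. rewrite <- !sumC_scal. apply sumC_ext; intros. ring.
  - rewrite sumC_swap. apply sumC_ext; intros. rewrite <- sumC_scal. reflexivity.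
Qed.

Lemma herm_inner d M x y : hermitian d M -> inner d x (mv d M y) = Cconj (inner d y (mv d M x)).
Proof.
  intros H. unfold inner, mv. rewrite sumC_conj.
  transitivity (sumC d (fun a => sumC d (fun b => Cconj (x a) <*> M a b <*> y b))).
  - apply sumC_ext; intros. rewrite <- sumC_scal. apply sumC_ext; intros. ring.
  - rewrite sumC_swap. apply sumC_ext; intros b Hb. rewrite Cconj_mul, sumC_conj, <- sumC_scal.
    apply sumC_ext; intros a Ha. rewrite H by auto. rewrite Cconj_mul, !Cconj_conj. ring.
Qed.

Definition rhoA d (P : nat -> R) (W : nat -> vec) : mat :=
  fun i j => sumC d (fun k => RtoC (P k) <*> (W k i <*> Cconj (W k j))).

Lemma tr_rho d P W B : mxtr d (mxmul d (rhoA d P W) B)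
  = sumC d (fun m => RtoC (P m) <*> inner d (W m) (mv d B (W m))).
Proof.
  unfold mxtr, mxmul, rhoA, inner, mv.
  transitivity (sumC d (fun i => sumC d (fun l => sumC d (fun m =>
      RtoC (P m) <*> (Cconj (W m l) <*> (B l i <*> W m i)))))).
  - apply sumC_ext; intros. apply sumC_ext; intros. rewrite <- sumC_scalr. apply sumC_ext; intros. ring.
  - rewrite sumC_swap. transitivity (sumC d (fun l => sumC d (fun m => sumC d (fun i =>
      RtoC (P m) <*> (Cconj (W m l) <*> (B l i <*> W m i)))))).
    + apply sumC_ext; intros. apply sumC_swap.
    + rewrite sumC_swap. apply sumC_ext; intros. rewrite <- sumC_scal. apply sumC_ext; intros.
      rewrite <- !sumC_scal. reflexivity.
Qed.

Lemma mv_rhoW d P W k a : ONB d W -> (k < d)%nat ->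
  mv d (rhoA d P W) (W k) a = RtoC (P k) <*> W k a.
Proof.
  intros HO Hk. unfold mv, rhoA.
  transitivity (sumC d (fun m => RtoC (dlt m k) <*> (RtoC (P m) <*> W m a))).
  - transitivity (sumC d (fun b => sumC d (fun m => RtoC (P m) <*> W m a <*> (Cconj (W m b) <*> W k b)))).
    + apply sumC_ext; intros. rewrite <- sumC_scalr. apply sumC_ext; intros. ring.
    + rewrite sumC_swap. apply sumC_ext; intros m Hm. rewrite sumC_scal.
      change (sumC d (fun i => Cconj (W m i) <*> W k i)) with (inner d (W m) (W k)).
      rewrite HO by auto. ring.
  - apply sumC_delta; auto.
Qed.

Lemma deltaW d W c g j : ONB d W -> (j < d)%nat ->
  sumC d (fun m => c m <*> inner d (W j) (W m) <*> g m) = c j <*> g j.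
Proof.
  intros HO Hj. rewrite <- (sumC_delta' d j (fun m => c m <*> g m)) by auto.
  apply sumC_ext; intros. rewrite HO by auto. ring.
Qed.
Lemma deltaW' d W c g k : ONB d W -> (k < d)%nat ->
  sumC d (fun m => c m <*> g m <*> inner d (W m) (W k)) = c k <*> g k.
Proof.
  intros HO Hk. rewrite <- (sumC_delta d k (fun m => c m <*> g m)) by auto.
  apply sumC_ext; intros. rewrite HO by auto. ring.
Qed.

Lemma inner_mv_vext d x M y y' : (forall b, (b < d)%nat -> y b = y' b) ->
  inner d x (mv d M y) = inner d x (mv d M y').
Proof.
  intros H. apply inner_ext; auto. intros. unfold mv. apply sumC_ext; intros. rewrite H; auto.
Qed.
Lemma inner_mv_scalv d x M c y : inner d x (mv d M (fun b => c <*> y b)) = c <*> inner d x (mv d M y).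
Proof.
  unfold inner, mv. rewrite <- sumC_scal. apply sumC_ext; intros.
  transitivity (sumC d (fun b => c <*> (Cconj (x i) <*> (M i b <*> y b)))).
  - rewrite <- sumC_scal. apply sumC_ext; intros. ring.
  - rewrite sumC_scal, sumC_scal. reflexivity.
Qed.

Definition Lm d (W : nat -> vec) (lam : mat) j k := inner d (W j) (mv d lam (W k)).

Lemma key d P W u dp drho lam j k :
  ONB d W ->
  (forall j k, (j < d)%nat -> (k < d)%nat -> inner d (u j) (W k) <+> inner d (W j) (u k) = C0) ->
  (forall a b, (a < d)%nat -> (b < d)%nat -> drho a b = sumC d (fun m =>
      RtoC (dp m) <*> (W m a <*> Cconj (W m b)) <+>
      RtoC (P m) <*> (u m a <*> Cconj (W m b) <+> W m a <*> Cconj (u m b)))) ->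
  SLD_eq d (rhoA d P W) drho lam ->
  (j < d)%nat -> (k < d)%nat ->
  RtoC ((P j + P k) / 2) <*> Lm d W lam j k
  = RtoC (dlt j k * dp j) <+> RtoC (P j - P k) <*> inner d (u j) (W k).
Proof.
  intros HO HD HR HS Hj Hk.
  assert (E1 : inner d (W j) (mv d drho (W k)) =
     RtoC (/2) <*> (RtoC (P j) <*> Lm d W lam j k <+> RtoC (P k) <*> Lm d W lam j k)).
  { rewrite (inner_mv_ext d (W j) drho (fun a b => RtoC (/2) <*>
        (mxmul d (rhoA d P W) lam a b <+> mxmul d lam (rhoA d P W) a b))) by (intros; apply HS; auto).
    rewrite inner_mv_scal, inner_mv_add, !mv_mul. f_equal. f_equal.
    - unfold rhoA. rewrite sandwich. rewrite (deltaW d W (fun m => RtoC (P m))); auto.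
    - rewrite (inner_mv_vext d (W j) lam _ (fun b => RtoC (P k) <*> W k b)).
      + rewrite inner_mv_scalv. reflexivity.
      + intros. apply mv_rhoW; auto. }
  assert (E2 : inner d (W j) (mv d drho (W k)) =
     RtoC (dlt j k * dp j) <+> RtoC (P k) <*> inner d (W j) (u k) <+> RtoC (P j) <*> inner d (u j) (W k)).
  { rewrite (inner_mv_ext d (W j) drho (fun a b =>
       sumC d (fun m => RtoC (dp m) <*> (W m a <*> Cconj (W m b))) <+>
       (sumC d (fun m => RtoC (P m) <*> (u m a <*> Cconj (W m b))) <+>
        sumC d (fun m => RtoC (P m) <*> (W m a <*> Cconj (u m b)))))).
    2:{ intros a b Ha Hb. rewrite HR by auto. rewrite <- !sumC_add. apply sumC_ext; intros. ring. }
    rewrite !inner_mv_add, !sandwich.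
    rewrite (deltaW d W (fun m => RtoC (dp m))) by auto.
    rewrite (deltaW' d W (fun m => RtoC (P m))) by auto.
    rewrite (deltaW d W (fun m => RtoC (P m))) by auto.
    rewrite HO by auto. rewrite RtoC_mul. ring. }
  rewrite E1 in E2.
  assert (Hx := HD j k Hj Hk).
  assert (Hw : inner d (W j) (u k) = Cneg (inner d (u j) (W k))).
  { transitivity (inner d (u j) (W k) <+> inner d (W j) (u k) <+> Cneg (inner d (u j) (W k))).
    - ring.
    - rewrite Hx. ring. }
  rewrite Hw in E2.
  transitivity (RtoC (/2) <*> (RtoC (P j) <*> Lm d W lam j k <+> RtoC (P k) <*> Lm d W lam j k)).
  - apply C_eq; simpl; field.
  - rewrite E2. apply C_eq; simpl; ring.
Qed.

Lemma Hform d P W lam : ONB d W -> hermitian d lam ->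
  HSLD_of d (rhoA d P W) lam = RtoC (sumR d (fun m => P m * sumR d (fun n => Cnorm2 (Lm d W lam n m)))).
Proof.
  intros HO Hh. unfold HSLD_of. rewrite tr_rho. rewrite <- sumC_RtoC. apply sumC_ext; intros m Hm.
  rewrite mv_mul.
  rewrite (lin d (W m) lam (mv d lam (W m)) (fun n => inner d (W n) (mv d lam (W m))) W).
  2:{ intros. apply expand; auto. }
  rewrite RtoC_mul, <- sumC_RtoC. f_equal. apply sumC_ext; intros n Hn.
  rewrite (herm_inner d lam (W m) (W n)) by auto. rewrite <- Cnorm2_eq. reflexivity.
Qed.

Lemma sumR_ext n f g : (forall i, (i < n)%nat -> f i = g i) -> sumR n f = sumR n g.
Proof.
  induction n; intros H; simpl; auto.
  rewrite IHn by (intros; apply H; lia). rewrite (H n) by lia. reflexivity.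
Qed.
Lemma sumR_add n f g : sumR n (fun i => f i + g i) = sumR n f + sumR n g.
Proof. induction n; simpl. ring. rewrite IHn. ring. Qed.
Lemma sumR_scal n c f : sumR n (fun i => c * f i) = c * sumR n f.
Proof. induction n; simpl. ring. rewrite IHn. ring. Qed.
Lemma sumR_nonneg n f : (forall i, (i < n)%nat -> 0 <= f i) -> 0 <= sumR n f.
Proof. induction n; intros H; simpl. lra. assert (0 <= f n) by (apply H; lia). assert (0 <= sumR n f) by (apply IHn; intros; apply H; lia). lra. Qed.
Lemma sumR_zero_iff n f : (forall i, (i < n)%nat -> 0 <= f i) ->
  (sumR n f = 0 <-> forall i, (i < n)%nat -> f i = 0).
Proof.
  induction n; intros H; simpl. split; intros; [lia|auto].
  assert (0 <= f n) by (apply H; lia).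
  assert (Hs : 0 <= sumR n f) by (apply sumR_nonneg; intros; apply H; lia).
  split.
  - intros E i Hi. assert (f n = 0) by lra. assert (sumR n f = 0) by lra.
    destruct (Nat.eq_dec i n). subst; auto.
    apply (proj1 (IHn (fun i Hi => H i ltac:(lia)))); auto. lia.
  - intros E. rewrite (proj2 (IHn (fun i Hi => H i ltac:(lia)))). rewrite E by lia. ring.
    intros; apply E; lia.
Qed.
Lemma sumR_split n f : sumR n (fun m => sumR n (fun k => f k m)) =
  sumR n (fun m => f m m) + sumR n (fun k => sumR k (fun j => f j k + f k j)).
Proof.
  induction n; simpl. ring.
  rewrite !sumR_add. rewrite IHn. ring.
Qed.

Lemma pairG pj pk N Cjk Ckj : 0 <= pj -> 0 <= pk -> 0 <= N -> 0 <= Cjk -> 0 <= Ckj ->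
  ((pj + pk) / 2) * ((pj + pk) / 2) * Cjk = (pj - pk) * (pj - pk) * N ->
  ((pk + pj) / 2) * ((pk + pj) / 2) * Ckj = (pk - pj) * (pk - pj) * N ->
  0 <= 4 * ((pj + pk) * N) - (pk * Cjk + pj * Ckj) /\
  (4 * ((pj + pk) * N) - (pk * Cjk + pj * Ckj) = 0 <-> (0 < pj -> 0 < pk -> N = 0)).
Proof.
  intros h1 h2 h3 h4 h5 e1 e2.
  destruct (Req_dec (pj + pk) 0) as [hs|hs].
  - assert (pj = 0) by lra. assert (pk = 0) by lra. subst.
    split. lra. split; intros; [lra|]. lra.
  - assert (hp : 0 < pj + pk) by lra.
    assert (c1 : Cjk = 4 * ((pj - pk) * (pj - pk) * N) / ((pj + pk) * (pj + pk))).
    { apply (Rmult_eq_reg_l (((pj + pk) / 2) * ((pj + pk) / 2)));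
        [rewrite e1; field; lra | apply Rmult_integral_contrapositive; split; lra]. }
    assert (c2 : Ckj = 4 * ((pj - pk) * (pj - pk) * N) / ((pj + pk) * (pj + pk))).
    { apply (Rmult_eq_reg_l (((pj + pk) / 2) * ((pj + pk) / 2))).
      2:{ apply Rmult_integral_contrapositive; split; lra. }
      replace (pj + pk) with (pk + pj) at 1 2 by ring. rewrite e2. field. lra. }
    assert (g : 4 * ((pj + pk) * N) - (pk * Cjk + pj * Ckj) = 16 * (pj * pk * N) / (pj + pk)).
    { rewrite c1, c2. field. lra. }
    rewrite g. split.
    + apply Rmult_le_pos; [|left; apply Rinv_0_lt_compat; lra].
      assert (0 <= pj * pk) by nra. nra.
    + split.
      * intros E hj hk. assert (16 * (pj * pk * N) = 0).
        { apply (Rmult_eq_reg_r (/ (pj + pk))). rewrite Rmult_0_l. exact E.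
          apply Rinv_neq_0_compat; lra. }
        assert (0 < pj * pk) by nra. nra.
      * intros H. destruct (Req_dec pj 0). subst. unfold Rdiv. ring.
        destruct (Req_dec pk 0). subst. unfold Rdiv. ring.
        rewrite H by lra. unfold Rdiv. ring.
Qed.

Lemma final_alg d P dp Nf Cf :
  (forall k, (k < d)%nat -> 0 <= P k) ->
  (forall j k, (j < d)%nat -> (k < d)%nat -> 0 <= Nf j k) ->
  (forall j k, (j < d)%nat -> (k < d)%nat -> Nf k j = Nf j k) ->
  (forall j k, (j < d)%nat -> (k < d)%nat -> 0 <= Cf j k) ->
  (forall m, (m < d)%nat -> P m * P m * Cf m m = dp m * dp m) ->
  (forall j k, (j < d)%nat -> (k < d)%nat -> j <> k ->
     ((P j + P k) / 2) * ((P j + P k) / 2) * Cf j k = (P j - P k) * (P j - P k) * Nf j k) ->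
  (sumR d (fun m => P m * sumR d (fun n => Cf n m)) =
     sumR d (fun i => if Req_EM_T (P i) 0 then 0 else / P i * (dp i * dp i))
     + 4 * sumR d (fun k => sumR k (fun j => (P j + P k) * Nf j k))
   <-> forall j k, (j < d)%nat -> (k < d)%nat -> j <> k -> 0 < P j -> 0 < P k -> Nf j k = 0).
Proof.
  intros HP HN HNs HC Hdiag Hoff.
  rewrite (sumR_ext d _ (fun m => sumR d (fun n => P m * Cf n m))) by (intros; symmetry; apply sumR_scal).
  rewrite (sumR_split d (fun n m => P m * Cf n m)).
  rewrite (sumR_ext d (fun m => P m * Cf m m) (fun i => if Req_EM_T (P i) 0 then 0 else / P i * (dp i * dp i))).
  2:{ intros i Hi. destruct (Req_EM_T (P i) 0) as [e|e]. rewrite e; ring.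
      apply (Rmult_eq_reg_l (P i)); auto. rewrite <- Hdiag by auto. field. auto. }
  set (G := fun k => sumR k (fun j => 4 * ((P j + P k) * Nf j k) - (P k * Cf j k + P j * Cf k j))).
  assert (HG : 4 * sumR d (fun k => sumR k (fun j => (P j + P k) * Nf j k)) =
      sumR d (fun k => sumR k (fun j => P k * Cf j k + P j * Cf k j)) + sumR d G).
  { unfold G. rewrite <- sumR_add, <- sumR_scal. apply sumR_ext; intros k Hk.
    rewrite <- sumR_add, <- sumR_scal. apply sumR_ext; intros. ring. }
  assert (Hpair : forall j k, (j < k)%nat -> (k < d)%nat ->
     0 <= 4 * ((P j + P k) * Nf j k) - (P k * Cf j k + P j * Cf k j) /\
     (4 * ((P j + P k) * Nf j k) - (P k * Cf j k + P j * Cf k j) = 0 <-> (0 < P j -> 0 < P k -> Nf j k = 0))).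
  { intros j k hjk hk. apply pairG; try (apply HP || apply HN || apply HC); try lia.
    apply Hoff; lia. rewrite <- (HNs j k) by lia. apply Hoff; lia. }
  rewrite HG.
  assert (Hg : sumR d G = 0 <-> forall k j, (k < d)%nat -> (j < k)%nat -> 
     4 * ((P j + P k) * Nf j k) - (P k * Cf j k + P j * Cf k j) = 0).
  { unfold G. rewrite sumR_zero_iff.
    - split.
      + intros H k j hk hj. specialize (H k hk). rewrite sumR_zero_iff in H. apply H; auto.
        intros; apply Hpair; lia.
      + intros H k hk. rewrite sumR_zero_iff. intros; apply H; auto. intros; apply Hpair; lia.
    - intros k hk. apply sumR_nonneg. intros; apply Hpair; lia. }
  split.
  - intros E. assert (E' : sumR d G = 0) by lra. rewrite Hg in E'.
    intros j k hj hk hne pj pk. destruct (Nat.lt_ge_cases j k).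
    + apply (proj1 (proj2 (Hpair j k H hk))); auto.
    + rewrite <- HNs by auto. apply (proj1 (proj2 (Hpair k j ltac:(lia) hj))); auto.
      apply E'; lia.
  - intros H. assert (E' : sumR d G = 0).
    { apply Hg. intros k j hk hj. apply (proj2 (proj2 (Hpair j k hj hk))). intros; apply H; auto; lia. }
    lra.
Qed.


Lemma dl_eq f x l l' : derivable_pt_lim f x l -> l = l' -> derivable_pt_lim f x l'.
Proof. intros H e; subst; auto. Qed.

Lemma dC_add f g x a b : derivableC_lim f x a -> derivableC_lim g x b ->
  derivableC_lim (fun t => f t <+> g t) x (a <+> b).
Proof.
  intros [h1 h2] [h3 h4]. split; simpl.
  - exact (derivable_pt_lim_plus _ _ _ _ _ h1 h3).
  - exact (derivable_pt_lim_plus _ _ _ _ _ h2 h4).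
Qed.
Lemma dC_mul f g x a b : derivableC_lim f x a -> derivableC_lim g x b ->
  derivableC_lim (fun t => f t <*> g t) x (a <*> g x <+> f x <*> b).
Proof.
  intros [h1 h2] [h3 h4]. split; simpl.
  - eapply dl_eq. exact (derivable_pt_lim_minus _ _ _ _ _
       (derivable_pt_lim_mult _ _ _ _ _ h1 h3) (derivable_pt_lim_mult _ _ _ _ _ h2 h4)).
    simpl. ring.
  - eapply dl_eq. exact (derivable_pt_lim_plus _ _ _ _ _
       (derivable_pt_lim_mult _ _ _ _ _ h1 h4) (derivable_pt_lim_mult _ _ _ _ _ h2 h3)).
    simpl. ring.
Qed.
Lemma dC_conj f x a : derivableC_lim f x a -> derivableC_lim (fun t => Cconj (f t)) x (Cconj a).
Proof. intros [h1 h2]. split; simpl. exact h1. exact (derivable_pt_lim_opp _ _ _ h2). Qed.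
Lemma dC_R f x l : derivable_pt_lim f x l -> derivableC_lim (fun t => RtoC (f t)) x (RtoC l).
Proof. intros h. split; simpl. exact h. exact (derivable_pt_lim_const 0 x). Qed.
Lemma dC_const c x : derivableC_lim (fun _ => c) x C0.
Proof. split; simpl. exact (derivable_pt_lim_const (Re c) x). exact (derivable_pt_lim_const (Im c) x). Qed.
Lemma dC_sum n f a x : (forall k, (k < n)%nat -> derivableC_lim (f k) x (a k)) ->
  derivableC_lim (fun t => sumC n (fun k => f k t)) x (sumC n a).
Proof.
  induction n; intros H; simpl.
  - apply dC_const.
  - apply dC_add. apply IHn; intros; apply H; lia. apply H; lia.
Qed.
Lemma dC_unique f x a b : derivableC_lim f x a -> derivableC_lim f x b -> a = b.
Proof.
  intros [h1 h2] [h3 h4]. apply C_eq. exact (uniqueness_limite _ _ _ _ h1 h3).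
  exact (uniqueness_limite _ _ _ _ h2 h4).
Qed.
Lemma d_local f g x l e : 0 < e -> (forall y, Rabs (y - x) < e -> f y = g y) ->
  derivable_pt_lim g x l -> derivable_pt_lim f x l.
Proof.
  intros he Hfg H eps heps. destruct (H eps heps) as [del Hd].
  assert (hm : 0 < Rmin del e) by (apply Rmin_pos; [apply cond_pos|auto]).
  exists (mkposreal _ hm). intros h hh hr. simpl in hr.
  rewrite (Hfg (x + h)), (Hfg x).
  - apply Hd; auto. apply Rlt_le_trans with (1 := hr). apply Rmin_l.
  - replace (x - x) with 0 by ring. rewrite Rabs_R0. auto.
  - replace (x + h - x) with h by ring. apply Rlt_le_trans with (1 := hr). apply Rmin_r.
Qed.
Lemma dC_local f g x a e : 0 < e -> (forall y, Rabs (y - x) < e -> f y = g y) ->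
  derivableC_lim g x a -> derivableC_lim f x a.
Proof.
  intros he Hfg [h1 h2]. split.
  - apply (d_local _ (fun t => Re (g t)) _ _ e); auto. intros; rewrite Hfg; auto.
  - apply (d_local _ (fun t => Im (g t)) _ _ e); auto. intros; rewrite Hfg; auto.
Qed.

Lemma sumR_ge1 n f j : (forall i, (i < n)%nat -> 0 <= f i) -> (j < n)%nat -> f j <= sumR n f.
Proof.
  induction n; intros H Hj; simpl. lia.
  assert (0 <= sumR n f) by (apply sumR_nonneg; intros; apply H; lia).
  destruct (Nat.eq_dec j n). subst. lra.
  assert (f j <= sumR n f) by (apply IHn; [intros; apply H; lia | lia]).
  assert (0 <= f n) by (apply H; lia). lra.
Qed.
Lemma sumR_ge2 n f j k : (forall i, (i < n)%nat -> 0 <= f i) -> (j < n)%nat -> (k < n)%nat -> j <> k ->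
  f j + f k <= sumR n f.
Proof.
  induction n; intros H Hj Hk Hne; simpl. lia.
  assert (0 <= f n) by (apply H; lia).
  destruct (Nat.eq_dec j n).
  - subst. assert (f k <= sumR n f) by (apply sumR_ge1; [intros; apply H; lia | lia]). lra.
  - destruct (Nat.eq_dec k n).
    + subst. assert (f j <= sumR n f) by (apply sumR_ge1; [intros; apply H; lia | lia]). lra.
    + assert (f j + f k <= sumR n f) by (apply IHn; [intros; apply H; lia | lia | lia | auto]). lra.
Qed.


Lemma Cnorm2_nonneg z : 0 <= Cnorm2 z.
Proof. unfold Cnorm2. nra. Qed.
Lemma Cnorm2_zero z : Cnorm2 z = 0 <-> z = C0.
Proof.
  unfold Cnorm2. split.
  - intros H. assert (Re z = 0) by nra. assert (Im z = 0) by nra. apply C_eq; simpl; auto.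
  - intros ->. simpl. ring.
Qed.

Lemma Cn_scal a z : Cnorm2 (RtoC a <*> z) = a * a * Cnorm2 z.
Proof. unfold Cnorm2; simpl; ring. Qed.
Lemma Cn_diag b z : Cnorm2 (RtoC (1 * b) <+> RtoC 0 <*> z) = b * b.
Proof. unfold Cnorm2; simpl; ring. Qed.
Lemma Cn_off b c z : Cnorm2 (RtoC (0 * b) <+> RtoC c <*> z) = c * c * Cnorm2 z.
Proof. unfold Cnorm2; simpl; ring. Qed.

Theorem lemma3
  (d : nat) (Iv : R -> Prop) (p : nat -> R -> R) (w : nat -> R -> vec)
  (theta : R) (dp : nat -> R) (dw : nat -> vec) (drho : mat) (lam : mat) :
  is_open_interval Iv ->
  (* p_k : I -> [0,1] smooth, summing to 1 *)
  (forall k, (k < d)%nat -> smooth_on Iv (p k)) ->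
  (forall k t, (k < d)%nat -> Iv t -> 0 <= p k t <= 1) ->
  (forall t, Iv t -> sumR d (fun k => p k t) = 1) ->
  (* w_1(t), ..., w_d(t) orthonormal basis of C^d, smooth in t *)
  (forall k i, (k < d)%nat -> (i < d)%nat -> smoothC_on Iv (fun t => w k t i)) ->
  (forall t j k, Iv t -> (j < d)%nat -> (k < d)%nat ->
       inner d (w j t) (w k t) = RtoC (if Nat.eq_dec j k then 1 else 0)) ->
  Iv theta ->
  (* dp, dw, drho are the theta-derivatives at theta *)
  (forall k, (k < d)%nat -> derivable_pt_lim (p k) theta (dp k)) ->
  (forall k i, (k < d)%nat -> (i < d)%nat ->
       derivableC_lim (fun t => w k t i) theta (dw k i)) ->
  (forall i j, (i < d)%nat -> (j < d)%nat ->
       derivableC_lim (fun t => rho d p w t i j) theta (drho i j)) ->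
  (* lam is a Hermitian solution of the SLD equation at theta *)
  hermitian d lam ->
  SLD_eq d (rho d p w theta) drho lam ->
  (HSLD_of d (rho d p w theta) lam
     = RtoC (CL d (fun k => p k theta) dp (fun k => w k theta) dw)
   <->
   (forall j k, (j < d)%nat -> (k < d)%nat -> j <> k ->
      0 < p j theta -> 0 < p k theta -> inner d (dw j) (w k theta) = C0))
  /\
  (pure_state d (rho d p w theta) ->
   HSLD_of d (rho d p w theta) lam
     = RtoC (CL d (fun k => p k theta) dp (fun k => w k theta) dw)).
Proof.
  intros HI Hsm Hp01 Hsum Hwsm Hon Hth Hdp Hdw Hdrho Hh HS.
  set (P := fun k => p k theta). set (W := fun k => w k theta).
  assert (HO : ONB d W) by (intros j k hj hk; apply Hon; auto).
  destruct HI as [_ [_ Hopen]]. destruct (Hopen theta Hth) as [e [he Hball]].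
  (* derivative of orthonormality *)
  assert (HD : forall j k, (j < d)%nat -> (k < d)%nat ->
      inner d (dw j) (W k) <+> inner d (W j) (dw k) = C0).
  { intros j k hj hk.
    assert (D1 : derivableC_lim (fun t => inner d (w j t) (w k t)) theta
                  (inner d (dw j) (W k) <+> inner d (W j) (dw k))).
    { unfold inner. rewrite <- sumC_add. apply dC_sum. intros i hi.
      apply (dC_mul (fun t => Cconj (w j t i)) (fun t => w k t i)).
      apply dC_conj. apply Hdw; auto. apply Hdw; auto. }
    assert (D2 : derivableC_lim (fun t => inner d (w j t) (w k t)) theta C0).
    { apply (dC_local _ (fun _ => RtoC (dlt j k)) _ _ e he).
      - intros y hy. apply Hon; auto.
      - apply dC_const. }
    exact (dC_unique _ _ _ _ D1 D2). }
  assert (HR : forall a b, (a < d)%nat -> (b < d)%nat -> drho a b = sumC d (fun m =>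
      RtoC (dp m) <*> (W m a <*> Cconj (W m b)) <+>
      RtoC (P m) <*> (dw m a <*> Cconj (W m b) <+> W m a <*> Cconj (dw m b)))).
  { intros a b ha hb. apply (dC_unique (fun t => rho d p w t a b) theta); auto.
    unfold rho. apply dC_sum. intros k hk.
    apply (dC_mul (fun t => RtoC (p k t)) (fun t => w k t a <*> Cconj (w k t b))).
    apply (dC_R (p k)). auto.
    apply (dC_mul (fun t => w k t a) (fun t => Cconj (w k t b))). auto. apply dC_conj; auto. }
  assert (HP : forall k, (k < d)%nat -> 0 <= P k) by (intros; apply Hp01; auto).
  assert (HK := fun j k => key d P W dw dp drho lam j k HO HD HR HS).
  change (rho d p w theta) with (rhoA d P W).
  rewrite (Hform d P W lam HO Hh).
  assert (part1 :
   sumR d (fun m => P m * sumR d (fun n => Cnorm2 (Lm d W lam n m)))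
     = CL d P dp W dw
   <-> (forall j k, (j < d)%nat -> (k < d)%nat -> j <> k ->
      0 < P j -> 0 < P k -> inner d (dw j) (W k) = C0)).
  { unfold CL. eapply iff_trans.
    - apply (final_alg d P dp (fun j k => Cnorm2 (inner d (dw j) (W k)))
                 (fun n m => Cnorm2 (Lm d W lam n m))).
      + auto.
      + intros; apply Cnorm2_nonneg.
      + intros j k hj hk.
        assert (Hx := HD k j hk hj).
        rewrite (inner_conj d (W k) (dw j)) in Hx.
        assert (E : inner d (dw k) (W j) = Cneg (Cconj (inner d (dw j) (W k)))).
        { transitivity (inner d (dw k) (W j) <+> Cconj (inner d (dw j) (W k)) <+> Cneg (Cconj (inner d (dw j) (W k)))).
          ring. rewrite Hx. ring. }
        rewrite E. unfold Cnorm2. simpl. ring.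
      + intros; apply Cnorm2_nonneg.
      + intros m hm. assert (E := HK m m hm hm).
        apply (f_equal Cnorm2) in E. unfold dlt in E. destruct (Nat.eq_dec m m); [|congruence].
        replace (P m - P m) with 0 in E by ring.
        rewrite Cn_scal, Cn_diag in E.
        transitivity ((P m + P m) / 2 * ((P m + P m) / 2) * Cnorm2 (Lm d W lam m m)); [field|].
        rewrite E; ring.
      + intros j k hj hk hne. assert (E := HK j k hj hk).
        apply (f_equal Cnorm2) in E. unfold dlt in E. destruct (Nat.eq_dec j k); [congruence|].
        rewrite Cn_scal, Cn_off in E. exact E.
    - split.
      + intros H j k hj hk hne pj pk. apply Cnorm2_zero. apply H; auto.
      + intros H j k hj hk hne pj pk. apply Cnorm2_zero. apply H; auto. }
  assert (RI : forall x y, RtoC x = RtoC y <-> x = y).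
  { intros x y; split; intros H. apply (f_equal Re) in H. exact H. rewrite H; auto. }
  split.
  - rewrite RI. exact part1.
  - intros Hpure. change (rho d p w theta) with (rhoA d P W) in Hpure.
    apply RI. apply part1. intros j k hj hk hne pj pk. exfalso.
    assert (H01 : forall k, (k < d)%nat -> P k * P k = P k).
    { intros m hm.
      assert (a1 : inner d (W m) (mv d (rhoA d P W) (W m)) = RtoC (P m)).
      { unfold rhoA. rewrite sandwich. rewrite (deltaW d W (fun m => RtoC (P m))) by auto.
        rewrite HO by auto. unfold dlt. destruct (Nat.eq_dec m m); [|congruence]. ceq. }
      assert (a2 : inner d (W m) (mv d (mxmul d (rhoA d P W) (rhoA d P W)) (W m)) = RtoC (P m * P m)).
      { rewrite mv_mul. unfold rhoA at 1. rewrite sandwich.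
        rewrite (deltaW d W (fun m => RtoC (P m))) by auto. rewrite a1. ceq. }
      rewrite (inner_mv_ext d (W m) _ (rhoA d P W)) in a2 by (intros; apply Hpure; auto).
      rewrite a1 in a2. apply RI in a2. auto. }
    assert (P j = 1). { assert (H1 := H01 j hj). apply (Rmult_eq_reg_l (P j)); lra. }
    assert (P k = 1). { assert (H1 := H01 k hk). apply (Rmult_eq_reg_l (P k)); lra. }
    assert (Hs := Hsum theta Hth).
    assert (Hge := sumR_ge2 d P j k HP hj hk hne).
    change (sumR d P = 1) in Hs. lra.
Qed.
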